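(* The Split Cycle VCCR satisfies Positive Involvement in Defeat: for every linear profile $\mathbf P$ and $x,y\in X(\mathbf P)$, if $(x,y)\notin sc(\mathbf P)$ and $\mathbf P'$ is obtained from $\mathbf P$ by adding one new voter whose ballot ranks $y$ above $x$, then $(x,y)\notin sc(\mathbf P')$.
   Context: Profiles: $\mathbf P:V\to\mathcal L(X)$, $V$ nonempty finite set of voters, $X=X(\mathbf P)$ nonempty finite set of candidates, $\mathcal L(X)$ strict linear orders. $\mathrm{Margin}_{\mathbf P}(x,y)$ = #voters ranking $x$ above $y$ minus #ranking $y$ above $x$. A majority path from $x_1$ to $x_n$ is $(x_1,\dots,x_n)$ with all $\mathrm{Margin}_{\mathbf P}(x_i,x_{i+1})>0$; its strength is the minimum of these margins. Split Cycle: $(x,y)\in sc(\mathbf P)$ iff $\mathrm{Margin}_{\mathbf P}(x,y)>0$ and it exceeds the strength of every majority path from $y$ to $x$. *)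

(* Defs.v *)
From HB Require Import structures.
From mathcomp Require Import all_boot all_order all_algebra.
Set Implicit Arguments. Unset Strict Implicit. Unset Printing Implicit Defensive.
Import Order.TTheory GRing.Theory Num.Theory.
Local Open Scope ring_scope.

(* A strict linear order on the candidate type X, as a boolean relation
   [r x y] = "x is ranked above y". *)
Definition strict_linear_order (X : finType) (r : rel X) : Prop :=
  [/\ irreflexive r, transitive r & forall x y, x != y -> r x y || r y x].

Definition profile (V X : finType) := V -> rel X.

Definition linear_profile (V X : finType) (P : profile V X) : Prop :=
  forall v, strict_linear_order (P v).

Definition margin (V X : finType) (P : profile V X) (x y : X) : int :=
  (#|[set v | P v x y]|%:Z - #|[set v | P v y x]|%:Z)%R.

Definition steps (X : Type) (x : X) (s : seq X) : seq (X * X) :=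
  zip (x :: s) s.

Definition majority_path (V X : finType) (P : profile V X) (x : X) (s : seq X)
  : bool :=
  (s != [::]) && all (fun e => 0 < margin P e.1 e.2) (steps x s).

(* Strength of the path x :: s: minimum of the margins along it
   (only meaningful when s is nonempty). *)
Definition path_strength (V X : finType) (P : profile V X) (x : X) (s : seq X)
  : int :=
  match steps x s with
  | [::] => 0
  | e :: es => foldl (fun m f => Order.min m (margin P f.1 f.2))
                     (margin P e.1 e.2) es
  end.

Definition split_cycle_defeat (V X : finType) (P : profile V X) (x y : X)
  : Prop :=
  0 < margin P x y /\
  forall s : seq X, majority_path P y s -> last y s = x ->
    path_strength P y s < margin P x y.

Definition add_voter (V X : finType) (P : profile V X) (b : rel X)
  : profile (option V) X :=
  fun v => match v with Some w => P w | None => b end.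

(* Main.v *)
Require Import Defs.
From mathcomp Require Import all_boot all_order all_algebra.
From mathcomp Require Import zify.
Import Order.TTheory GRing.Theory Num.Theory.

Lemma card_add (V X : finType) (P : profile V X) (b : rel X) (a c : X) :
  #|[set v | add_voter P b v a c]| = (b a c : nat) + #|[set w | P w a c]|.
Proof.
rewrite (cardsD1 None) inE /=; congr (_ + _).
have -> : [set v | add_voter P b v a c] :\ None = Some @: [set w | P w a c].
  apply/setP => -[w|]; rewrite !inE /=.
  - apply/idP/imsetP => [H|[w' Hw' [->]]]; first by exists w; rewrite ?inE.
    by move: Hw'; rewrite inE.
  - by apply/esym/imsetP => -[w' _].
by rewrite card_imset //; move=> u v [].
Qed.

Local Open Scope ring_scope.

Lemma margin_add (V X : finType) (P : profile V X) (b : rel X) (a c : X) :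
  margin (add_voter P b) a c = margin P a c + (b a c : nat)%:Z - (b c a : nat)%:Z.
Proof. rewrite /margin !card_add !PoszD; lia. Qed.

Lemma foldl_min_ge (T : Type) (g : T -> int) (k a : int) (l : seq T) :
  (k <= foldl (fun m f => Order.min m (g f)) a l) = (k <= a) && all (fun z => k <= g z) l.
Proof.
elim: l a => [|z l IH] a /=; first by rewrite andbT.
by rewrite IH le_min andbA.
Qed.

Lemma strength_ge (V X : finType) (P : profile V X) (y : X) (s : seq X) (k : int) :
  s != [::] ->
  (k <= path_strength P y s) = all (fun e => k <= margin P e.1 e.2) (steps y s).
Proof.
case: s => [|z s] // _; rewrite /path_strength /steps /=.
by rewrite foldl_min_ge.
Qed.

Local Close Scope ring_scope.
Theorem proposition3p14 (V X : finType) (P : profile V X) (b : rel X) (x y : X) :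
  0 < #|V| ->
  linear_profile P ->
  strict_linear_order b ->
  b y x ->
  ~ split_cycle_defeat P x y ->
  ~ split_cycle_defeat (add_voter P b) x y.
Proof.
Local Open Scope ring_scope.
move=> _ _ [birr btr _] byx nsc [pos H].
have bxy : b x y = false.
  by apply/negbTE/negP => bxy; move: (btr _ _ _ bxy byx); rewrite birr.
have Mxy : margin (add_voter P b) x y = margin P x y - 1.
  by rewrite margin_add bxy byx /=; lia.
have close : forall a c : X, margin P a c - 1 <= margin (add_voter P b) a c.
  by move=> a c; rewrite margin_add; case: (b a c); case: (b c a) => /=; lia.
apply: nsc; split; first by move: pos; rewrite Mxy; lia.
move=> s /andP [sne Hall] last_s; rewrite ltNge; apply/negP => Hst.
have Hp : majority_path (add_voter P b) y s.
  rewrite /majority_path sne /=; apply/allP => -[a c] he /=.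
  move: Hst; rewrite strength_ge // => /allP /(_ _ he) /= => h.
  have := close a c; move: pos; rewrite Mxy; lia.
have := H s Hp last_s; rewrite ltNge => /negP; apply.
rewrite strength_ge //; apply/allP => -[a c] he /=.
move: Hst; rewrite strength_ge // => /allP /(_ _ he) /= => h.
have := close a c; rewrite Mxy; lia.
Qed.
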